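(* Let $H$ be a connected simple algebraic group over an algebraically closed field of characteristic zero, with center $Z(H)$, and let $H[r]=H\times\cdots\times H$ ($r$ factors). Let $\underline x=(x_1,\dots,x_r)\in H[r]$ be such that $x_i\notin Z(H)$ for all $i$ and $x_ix_j^{-1}\notin Z(H)$ for all $i\ne j$. Let $L_r\subseteq H[r]$ be the smallest closed subgroup containing $\Gamma_r:=\{(\delta x_1\delta^{-1},\dots,\delta x_r\delta^{-1}):\delta\in H\}$. Then $L_r=H[r]$. *)

(* Defs.v *)
(* Linear algebraic groups over an algebraically closed field F
   of characteristic 0, realised as Zariski-closed subgroups of GL_n(F). *)
From HB Require Import structures.
From mathcomp Require Import all_boot all_order all_algebra.
Set Implicit Arguments. Unset Strict Implicit. Unset Printing Implicit Defensive.
Import GRing.Theory.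
Local Open Scope ring_scope.

Section AlgGroups.
Variable F : closedFieldType.

Inductive polyfun (I : Type) : ((I -> F) -> F) -> Prop :=
| pf_const (c : F) : polyfun (fun _ => c)
| pf_var (i : I) : polyfun (fun v => v i)
| pf_opp f : polyfun f -> polyfun (fun v => - f v)
| pf_add f g : polyfun f -> polyfun g -> polyfun (fun v => f v + g v)
| pf_mul f g : polyfun f -> polyfun g -> polyfun (fun v => f v * g v).

Definition zclosed (T I : Type) (coord : T -> I -> F) (S : T -> Prop) :=
  exists P : ((I -> F) -> F) -> Prop,
    (forall f, P f -> polyfun f) /\
    (forall x, S x <-> (forall f, P f -> f (coord x) = 0)).

Definition mx_coord n (A : 'M[F]_n) : 'I_n * 'I_n -> F :=
  fun ij => A ij.1 ij.2.

Definition tup_coord r n (x : 'I_r -> 'M[F]_n) : 'I_r * ('I_n * 'I_n) -> F :=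
  fun k => x k.1 k.2.1 k.2.2.

Definition is_mxgroup n (G : 'M[F]_n -> Prop) :=
  [/\ G 1%:M,
      (forall A, G A -> A \in unitmx),
      (forall A B, G A -> G B -> G (A *m B)) &
      (forall A, G A -> G (invmx A))].

(* G is a closed subgroup of GL_n(F), i.e. a linear algebraic group;
   its topology is the subspace (Zariski) topology. *)
Definition closed_mxgroup n (G : 'M[F]_n -> Prop) :=
  is_mxgroup G /\
  exists Z, zclosed (@mx_coord n) Z /\ (forall A, G A <-> Z A /\ A \in unitmx).

Definition zconnected n (G : 'M[F]_n -> Prop) :=
  forall Z1 Z2, zclosed (@mx_coord n) Z1 -> zclosed (@mx_coord n) Z2 ->
    (forall A, G A -> Z1 A \/ Z2 A) ->
    (forall A, G A -> Z1 A -> Z2 A -> False) ->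
    (forall A, G A -> Z1 A) \/ (forall A, G A -> Z2 A).

Definition normal_in n (N H : 'M[F]_n -> Prop) :=
  (forall A, N A -> H A) /\
  (forall h A, H h -> N A -> N (h *m A *m invmx h)).

Definition simple_alg_group n (H : 'M[F]_n -> Prop) :=
  [/\ closed_mxgroup H, zconnected H,
      (exists A B, [/\ H A, H B & A *m B <> B *m A]) &
      (forall N, closed_mxgroup N -> zconnected N -> normal_in N H ->
         (forall A, N A <-> A = 1%:M) \/ (forall A, N A <-> H A))].

Definition center n (H : 'M[F]_n -> Prop) (z : 'M[F]_n) :=
  H z /\ forall h, H h -> z *m h = h *m z.

Definition prodH n r (H : 'M[F]_n -> Prop) (x : 'I_r -> 'M[F]_n) :=
  forall i, H (x i).

Definition closed_subgroup_prod n r (H : 'M[F]_n -> Prop)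
    (K : ('I_r -> 'M[F]_n) -> Prop) :=
  [/\ K (fun _ => 1%:M),
      (forall x y, K x -> K y -> K (fun i => x i *m y i)),
      (forall x, K x -> K (fun i => invmx (x i))) &
      exists Z, zclosed (@tup_coord r n) Z /\
        (forall x, K x <-> Z x /\ prodH H x)].

Definition Gamma n r (H : 'M[F]_n -> Prop) (y : 'I_r -> 'M[F]_n)
    (x : 'I_r -> 'M[F]_n) :=
  exists d, H d /\ forall i, x i = d *m y i *m invmx d.

Definition Lr n r (H : 'M[F]_n -> Prop) (y : 'I_r -> 'M[F]_n)
    (x : 'I_r -> 'M[F]_n) :=
  forall K, closed_subgroup_prod H K -> (forall z, Gamma H y z -> K z) -> K x.

End AlgGroups.

(* Main.v *)
Require Import Defs.
From HB Require Import structures.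
From mathcomp Require Import all_boot all_order all_algebra.
From mathcomp Require Import ring fingroup perm.
From Stdlib Require Import FunctionalExtensionality Classical.
Local Open Scope ring_scope.

Module Aux.
Set Implicit Arguments. Unset Strict Implicit. Unset Printing Implicit Defensive.
Import GRing.Theory.
Local Open Scope ring_scope.

Section Poly.
Variable F : closedFieldType.
Local Notation pf := (@polyfun F).

Lemma pf_ext I (f g : (I -> F) -> F) : pf f -> (forall v, f v = g v) -> pf g.
Proof. by move=> hf e; have -> : g = f by apply: functional_extensionality => v; rewrite e. Qed.

Lemma pf_sum I T (r : seq T) (P : pred T) (f : T -> (I -> F) -> F) :
  (forall t, pf (f t)) -> pf (fun v => \sum_(t <- r | P t) f t v).
Proof.
move=> hf; elim: r => [|a r IH].
  by apply: (pf_ext (pf_const _ 0)) => v; rewrite big_nil.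
case Pa: (P a).
  by apply: (pf_ext (pf_add (hf a) IH)) => v; rewrite big_cons Pa.
by apply: (pf_ext IH) => v; rewrite big_cons Pa.
Qed.

Lemma pf_prod I T (r : seq T) (P : pred T) (f : T -> (I -> F) -> F) :
  (forall t, pf (f t)) -> pf (fun v => \prod_(t <- r | P t) f t v).
Proof.
move=> hf; elim: r => [|a r IH].
  by apply: (pf_ext (pf_const _ 1)) => v; rewrite big_nil.
case Pa: (P a).
  by apply: (pf_ext (pf_mul (hf a) IH)) => v; rewrite big_cons Pa.
by apply: (pf_ext IH) => v; rewrite big_cons Pa.
Qed.

Lemma pf_exp I (f : (I -> F) -> F) k : pf f -> pf (fun v => f v ^+ k).
Proof.
move=> hf; elim: k => [|k IH].
  by apply: (pf_ext (pf_const _ 1)) => v; rewrite expr0.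
by apply: (pf_ext (pf_mul hf IH)) => v; rewrite exprS.
Qed.

Lemma wcomp T I J (c : T -> I -> F) (Q : T -> Prop) (w : T -> F)
  (gw : (I -> F) -> F) (hgw : pf gw) (hw : forall t, w t = gw (c t))
  (phi : T -> J -> F)
  (hphi : forall j, exists g k, pf g /\ forall t, Q t -> w t ^+ k * phi t j = g (c t))
  (f : (J -> F) -> F) (hf : pf f) :
  exists g k, pf g /\ forall t, Q t -> w t ^+ k * f (phi t) = g (c t).
Proof.
elim: hf.
- move=> c0; exists (fun _ => c0), 0%N; split; first exact: pf_const.
  by move=> t _; rewrite expr0 mul1r.
- exact: hphi.
- move=> f0 _ [g [k [hg e]]]; exists (fun v => - g v), k; split; first exact: pf_opp.
  by move=> t Qt; rewrite mulrN e.
- move=> f1 f2 _ [g1 [k1 [hg1 e1]]] _ [g2 [k2 [hg2 e2]]].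
  exists (fun v => gw v ^+ k2 * g1 v + gw v ^+ k1 * g2 v), (k1 + k2)%N; split.
    by apply: pf_add; apply: pf_mul => //; apply: pf_exp.
  move=> t Qt; rewrite -e1 // -e2 // -hw exprD; ring.
- move=> f1 f2 _ [g1 [k1 [hg1 e1]]] _ [g2 [k2 [hg2 e2]]].
  exists (fun v => g1 v * g2 v), (k1 + k2)%N; split; first exact: pf_mul.
  move=> t Qt; rewrite -e1 // -e2 // exprD; ring.
Qed.

Lemma zpreim T I T' J (c : T -> I -> F) (c' : T' -> J -> F) (Q : T -> Prop)
  (w : T -> F) (gw : (I -> F) -> F) (hgw : pf gw) (hw : forall t, w t = gw (c t))
  (hwnz : forall t, Q t -> w t != 0) (phi : T -> T')
  (hphi : forall j, exists g k, pf g /\ forall t, Q t -> w t ^+ k * c' (phi t) j = g (c t))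
  (Z : T' -> Prop) : zclosed c' Z ->
  exists Z', zclosed c Z' /\ forall t, Q t -> (Z (phi t) <-> Z' t).
Proof.
move=> [P [hP hZ]].
pose P' := fun g => exists f k, [/\ P f, pf g &
   forall t, Q t -> w t ^+ k * f (c' (phi t)) = g (c t)].
exists (fun t => forall g, P' g -> g (c t) = 0); split.
  exists P'; split => // g [f [k [_ hg _]]] //.
move=> t Qt; rewrite hZ; split.
  move=> h g [f [k [Pf _ e]]]; by rewrite -e // h // mulr0.
move=> h f Pf.
have [g [k [hg e]]] := wcomp hgw hw hphi (hP f Pf).
have /eqP := h g (ex_intro _ f (ex_intro _ k (And3 Pf hg e))).
rewrite -e // mulf_eq0 expf_eq0 (negbTE (hwnz t Qt)) andbF /=.
by move/eqP.
Qed.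

Lemma zclosed_all T I (c : T -> I -> F) (A : Type) (Zs : A -> T -> Prop) :
  (forall a, zclosed c (Zs a)) -> zclosed c (fun t => forall a, Zs a t).
Proof.
move=> hZ.
pose P := fun f => exists a Pa, [/\ (forall f, Pa f -> pf f),
   (forall t, Zs a t <-> (forall f, Pa f -> f (c t) = 0)) & Pa f].
exists P; split; first by move=> f [a [Pa [h _ Pf]]]; exact: h.
move=> t; split.
  by move=> h f [a [Pa [_ e Pf]]]; move: (h a); rewrite e => /(_ f Pf).
move=> h a; have [Pa [h1 e]] := hZ a; rewrite e => f Pf.
by apply: h; exists a, Pa; split.
Qed.

Lemma zclosed_eqs T I (c : T -> I -> F) (A : Type) (e : A -> (I -> F) -> F) :
  (forall a, pf (e a)) -> zclosed c (fun t => forall a, e a (c t) = 0).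
Proof.
move=> he; exists (fun f => exists a, f = e a); split.
  by move=> f [a ->].
move=> t; split; first by move=> h f [a ->].
by move=> h a; apply: h; exists a.
Qed.

Lemma zclosed_and T I (c : T -> I -> F) (Z1 Z2 : T -> Prop) :
  zclosed c Z1 -> zclosed c Z2 -> zclosed c (fun t => Z1 t /\ Z2 t).
Proof.
move=> h1 h2.
have := @zclosed_all T I c bool (fun b => if b then Z1 else Z2).
case=> [[]//|P [hP e]]; exists P; split => // t; rewrite -e.
split; first by move=> [a b] [].
by move=> h; split; [exact: (h true)|exact: (h false)].
Qed.

Lemma zclosed_True T I (c : T -> I -> F) : zclosed c (fun _ => True).
Proof. by exists (fun _ => False); split. Qed.


Section Mx.
Variable n : nat.
Local Notation M := ('M[F]_n).

Lemma invmx_uniq (A B : M) : A *m B = 1%:M -> invmx A = B.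
Proof.
move=> e; have [uA _] := mulmx1_unit e.
by rewrite -[invmx A]mulmx1 -e mulmxA mulVmx // mul1mx.
Qed.

Lemma invmxM (A B : M) : A \in unitmx -> B \in unitmx ->
  invmx (A *m B) = invmx B *m invmx A.
Proof.
move=> uA uB; apply: invmx_uniq.
by rewrite mulmxA -(mulmxA A) mulmxV // mulmx1 mulmxV.
Qed.

Definition pexp (e : M -> F) := exists g, pf g /\ forall A, e A = g (mx_coord A).
Definition gexp (e : M -> F) := exists g k, pf g /\
  forall A, A \in unitmx -> \det A ^+ k * e A = g (mx_coord A).

Lemma det_poly m (Mf : M -> 'M[F]_m)
  (hM : forall a b, exists g, pf g /\ forall A, Mf A a b = g (mx_coord A)) :
  pexp (fun A => \det (Mf A)).
Proof.
pose f := fun v : 'I_m * 'I_m -> F =>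
  \sum_(s : 'S_m) (-1) ^+ s * \prod_i v (i, s i).
have hf : pf f.
  apply: pf_sum => s; apply: pf_mul; first exact: pf_const.
  by apply: pf_prod => i; apply: pf_var.
have := @wcomp _ _ _ (@mx_coord F n) (fun _ => True) (fun _ => 1)
  (fun _ => 1) (pf_const _ 1) (fun _ => erefl) (fun A => @mx_coord F m (Mf A)) _ f hf.
case.
  move=> [a b]; have [g [hg e]] := hM a b; exists g, 0%N; split => // A _.
  by rewrite expr0 mul1r /mx_coord e.
move=> g [k [hg e]]; exists g; split => // A.
by rewrite -e // expr1n mul1r.
Qed.

Lemma pexp_det : pexp (fun A => \det A).
Proof.
apply: (@det_poly n id) => a b; exists (fun v => v (a, b)); split => //.
exact: pf_var.
Qed.

Lemma gexp_ext (e e' : M -> F) : (forall A, A \in unitmx -> e A = e' A) -> gexp e -> gexp e'.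
Proof. by move=> h [g [k [hg E]]]; exists g, k; split => // A uA; rewrite -h ?E. Qed.

Lemma gexp_comp J (phi : M -> J -> F) (h : forall j, gexp (fun A => phi A j))
  f (hf : pf f) : gexp (fun A => f (phi A)).
Proof.
have [gd [hgd ed]] := pexp_det.
exact: (@wcomp _ _ _ (@mx_coord F n) (fun A => A \in unitmx) (fun A => \det A) gd hgd ed phi h f hf).
Qed.

Lemma gexp_const c : gexp (fun _ => c).
Proof.
by exists (fun _ => c), 0%N; split; [exact: pf_const| move=> A _; rewrite expr0 mul1r].
Qed.

Lemma gexp_entry i j : gexp (fun A => A i j).
Proof.
exists (fun v => v (i, j)), 0%N; split; first exact: pf_var.
by move=> A _; rewrite expr0 mul1r.
Qed.

Lemma gexp_add e1 e2 : gexp e1 -> gexp e2 -> gexp (fun A => e1 A + e2 A).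
Proof.
move=> h1 h2.
have hh : forall b, gexp (fun A => (fun A b => if b then e1 A else e2 A) A b) by case.
have := @gexp_comp bool (fun A b => if b then e1 A else e2 A) hh
  (fun v => v true + v false) (pf_add (pf_var _ true) (pf_var _ false)).
by [].
Qed.

Lemma gexp_mul e1 e2 : gexp e1 -> gexp e2 -> gexp (fun A => e1 A * e2 A).
Proof.
move=> h1 h2.
have hh : forall b, gexp (fun A => (fun A b => if b then e1 A else e2 A) A b) by case.
have := @gexp_comp bool (fun A b => if b then e1 A else e2 A) hh
  (fun v => v true * v false) (pf_mul (pf_var _ true) (pf_var _ false)).
by [].
Qed.

Lemma gexp_opp e : gexp e -> gexp (fun A => - e A).
Proof.
move=> h1.
have := @gexp_comp unit (fun A _ => e A) (fun _ => h1)
  (fun v => - v tt) (pf_opp (pf_var _ tt)).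
by [].
Qed.

Lemma gexp_sum T (r : seq T) (P : pred T) (e : T -> M -> F) :
  (forall t, gexp (e t)) -> gexp (fun A => \sum_(t <- r | P t) e t A).
Proof.
move=> h.
have := @gexp_comp T (fun A t => e t A) h (fun v => \sum_(t <- r | P t) v t)
  (pf_sum r P (fun t => pf_var _ t)).
by [].
Qed.

Lemma gexp_inv i j : gexp (fun A => invmx A i j).
Proof.
have [g [hg e]] : pexp (fun A => (-1) ^+ (j + i) * \det (row' j (col' i A))).
  have hM : forall a b, exists g, pf g /\ forall A, (row' j (col' i A)) a b = g (mx_coord A).
    move=> a b; exists (fun v => v (lift j a, lift i b)); split; first exact: pf_var.
    by move=> A; rewrite !mxE.
  have [g [hg e]] := @det_poly _ (fun A => row' j (col' i A)) hM.
  exists (fun v => (-1) ^+ (j + i) * g v); split.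
    by apply: pf_mul => //; apply: pf_const.
  by move=> A; rewrite e.
exists g, 1%N; split => // A uA.
rewrite /invmx uA mxE [X in _ * (_ * X)]mxE /cofactor -e expr1 mulrA mulrV ?mul1r //.
Qed.

Definition gm (Mf : M -> M) := forall i j, gexp (fun A => Mf A i j).

Lemma gm_id : gm id.
Proof. move=> i j; exact: gexp_entry. Qed.

Lemma gm_const C : gm (fun _ => C).
Proof. move=> i j; exact: gexp_const. Qed.

Lemma gm_inv : gm (fun A => invmx A).
Proof. move=> i j; exact: gexp_inv. Qed.

Lemma gm_mul M1 M2 : gm M1 -> gm M2 -> gm (fun A => M1 A *m M2 A).
Proof.
move=> h1 h2 i j; apply: (gexp_ext (e := fun A => \sum_k M1 A i k * M2 A k j)).
  by move=> A _; rewrite mxE.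
by apply: gexp_sum => k; apply: gexp_mul.
Qed.

Lemma gm_add M1 M2 : gm M1 -> gm M2 -> gm (fun A => M1 A + M2 A).
Proof.
move=> h1 h2 i j; apply: (gexp_ext (e := fun A => M1 A i j + M2 A i j)).
  by move=> A _; rewrite mxE.
exact: gexp_add.
Qed.

Lemma gm_opp M1 : gm M1 -> gm (fun A => - M1 A).
Proof.
move=> h1 i j; apply: (gexp_ext (e := fun A => - M1 A i j)).
  by move=> A _; rewrite mxE.
exact: gexp_opp.
Qed.


Lemma gm_ext (M1 M2 : M -> M) : (forall A, A \in unitmx -> M1 A = M2 A) -> gm M1 -> gm M2.
Proof. by move=> e h i j; apply: (gexp_ext (e := fun A => M1 A i j)) => // A uA; rewrite e. Qed.

Lemma gm_preim (Mf : M -> M) (hM : gm Mf) (Z : M -> Prop) :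
  zclosed (@mx_coord F n) Z ->
  exists Z', zclosed (@mx_coord F n) Z' /\
    forall A, A \in unitmx -> (Z (Mf A) <-> Z' A).
Proof.
have [gd [hgd ed]] := pexp_det.
apply: (@zpreim _ _ _ _ (@mx_coord F n) (@mx_coord F n) (fun A => A \in unitmx)
  (fun A => \det A) gd hgd ed _ Mf).
  by move=> A; rewrite unitmxE unitfE.
by move=> [i j]; apply: hM.
Qed.


Lemma zconn_ext (X X' : M -> Prop) : (forall A, X A <-> X' A) ->
  zconnected X -> zconnected X'.
Proof.
move=> e hX Z1 Z2 c1 c2 cov dis.
have [h|h] := hX Z1 Z2 c1 c2 (fun A hA => cov A ((e A).1 hA))
  (fun A hA => dis A ((e A).1 hA)).
  by left => A /e; apply: h.
by right => A /e; apply: h.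
Qed.

Lemma zconn_in (X Z1 Z2 : M -> Prop) : zconnected X ->
  zclosed (@mx_coord F n) Z1 -> zclosed (@mx_coord F n) Z2 ->
  (forall A, X A -> Z1 A \/ Z2 A) -> (forall A, X A -> Z1 A -> Z2 A -> False) ->
  forall p, X p -> Z1 p -> forall A, X A -> Z1 A.
Proof.
move=> hX c1 c2 cov dis p Xp Z1p.
have [h|h] := hX Z1 Z2 c1 c2 cov dis; first by [].
by case: (dis p Xp Z1p (h p Xp)).
Qed.

Lemma zconn_union (A : Type) (a0 : A) (Xs : A -> M -> Prop) p :
  (forall a, zconnected (Xs a)) -> (forall a, Xs a p) ->
  zconnected (fun B => exists a, Xs a B).
Proof.
move=> hc hp Z1 Z2 c1 c2 cov dis.
have Up : exists a, Xs a p by exists a0.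
have [h|h] := cov p Up; [left|right] => B [a hB].
  apply: (zconn_in (hc a) c1 c2 _ _ (hp a) h) => //.
    by move=> C hC; apply: cov; exists a.
  by move=> C hC; apply: dis; exists a.
apply: (zconn_in (hc a) c2 c1 _ _ (hp a) h) => //.
  by move=> C hC; rewrite or_comm; apply: cov; exists a.
by move=> C hC h1 h2; apply: (dis C _ h2 h1); exists a.
Qed.

Lemma zconn_image (X : M -> Prop) (Mf : M -> M) :
  (forall A, X A -> A \in unitmx) -> gm Mf -> zconnected X ->
  zconnected (fun B => exists A, X A /\ B = Mf A).
Proof.
move=> hu hM hX Z1 Z2 c1 c2 cov dis.
have [Z1' [c1' e1]] := gm_preim hM c1.
have [Z2' [c2' e2]] := gm_preim hM c2.
have cov' : forall A, X A -> Z1' A \/ Z2' A.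
  move=> A XA; have [h|h] := cov (Mf A) (ex_intro _ A (conj XA erefl)).
    by left; rewrite -e1 ?hu.
  by right; rewrite -e2 ?hu.
have dis' : forall A, X A -> Z1' A -> Z2' A -> False.
  move=> A XA; rewrite -e1 ?hu // -e2 ?hu //; apply: dis.
  by exists A.
have [h|h] := hX Z1' Z2' c1' c2' cov' dis'.
- by left => B [A [XA ->]]; rewrite e1 ?hu //; apply: h.
- by right => B [A [XA ->]]; rewrite e2 ?hu //; apply: h.
Qed.

Section Gen.
Variable X : M -> Prop.
Hypothesis hXu : forall A, X A -> A \in unitmx.
Hypothesis hX1 : X 1%:M.
Hypothesis hXc : zconnected X.

Definition Yg A := X A \/ exists B, X B /\ A = invmx B.
Fixpoint Wg k : M -> Prop :=
  match k with
  | 0 => fun A => A = 1%:M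
  | k.+1 => fun A => exists y w, [/\ Yg y, Wg k w & A = y *m w]
  end.
Definition G0 A := exists k, Wg k A.
Definition cl A := A \in unitmx /\
  forall Z, zclosed (@mx_coord F n) Z -> (forall B, G0 B -> Z B) -> Z A.

Lemma Yu A : Yg A -> A \in unitmx.
Proof. by case=> [/hXu//|[B [/hXu uB ->]]]; rewrite unitmx_inv. Qed.

Lemma Wu k A : Wg k A -> A \in unitmx.
Proof.
elim: k A => [A ->|k IH A [y [w [hy hw ->]]]]; first exact: unitmx1.
by rewrite unitmx_mul (Yu hy) (IH _ hw).
Qed.

Lemma G0u A : G0 A -> A \in unitmx.
Proof. by case=> k /Wu. Qed.

Lemma W_mul k m a b : Wg k a -> Wg m b -> Wg (k + m) (a *m b).
Proof.
elim: k a => [a ->|k IH a [y [w [hy hw ->]]]] hb; first by rewrite mul1mx.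
by exists y, (w *m b); split => //; [exact: IH|rewrite mulmxA].
Qed.

Lemma Y_inv y : Yg y -> Yg (invmx y).
Proof.
case=> [hy|[B [hB ->]]]; first by right; exists y.
by left; rewrite invmxK.
Qed.

Lemma W_inv k a : Wg k a -> Wg k (invmx a).
Proof.
elim: k a => [a ->|k IH a [y [w [hy hw ->]]]]; first by rewrite invmx1.
rewrite invmxM ?(Yu hy) ?(Wu hw) // -addn1.
apply: W_mul; first exact: IH.
by exists (invmx y), 1%:M; split => //; [exact: Y_inv|rewrite mulmx1].
Qed.

Lemma Y_conn : zconnected Yg.
Proof.
pose Xs := fun b : bool => if b then X else (fun B => exists A, X A /\ B = invmx A).
have e : forall A, (exists b : bool, Xs b A) <-> Yg A.
  move=> A; split; first by case=> [[]] h; [left|right; case: h => B [h1 h2]; exists B].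
  by case=> h; [exists true|exists false; case: h => B [h1 h2]; exists B].
apply: (zconn_ext e); apply: (@zconn_union bool true Xs 1%:M).
- case => //; apply: zconn_image => //; exact: gm_inv.
- by case => //; exists 1%:M; rewrite invmx1.
Qed.



Lemma G0_mul a b : G0 a -> G0 b -> G0 (a *m b).
Proof. by move=> [k ha] [m hb]; exists (k + m)%N; apply: W_mul. Qed.

Lemma G0_inv a : G0 a -> G0 (invmx a).
Proof. by move=> [k ha]; exists k; apply: W_inv. Qed.

Lemma G0_1 : G0 1%:M.
Proof. by exists 0%N. Qed.

Lemma X_G0 A : X A -> G0 A.
Proof. by move=> hA; exists 1%N, A, 1%:M; split => //; [left|rewrite mulmx1]. Qed.

Lemma cl_G0 A : G0 A -> cl A.
Proof. by move=> hA; split; [exact: G0u|move=> Z _ h; exact: h]. Qed.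

Lemma cl_zclosed : exists Z, zclosed (@mx_coord F n) Z /\
  forall A, cl A <-> Z A /\ A \in unitmx.
Proof.
pose Idx := {Z : M -> Prop | zclosed (@mx_coord F n) Z /\ forall B, G0 B -> Z B}.
exists (fun A => forall s : Idx, sval s A); split.
  apply: (zclosed_all (Zs := fun (s : Idx) => sval s)). by move=> s; exact: (proj1 (proj2_sig s)).
move=> A; split.
  by move=> [uA h]; split => // -[Z [hZ hG]] /=; apply: h.
move=> [h uA]; split => // Z hZ hG.
exact: (h (exist _ Z (conj hZ hG))).
Qed.

Lemma cl_mulG a b : G0 a -> cl b -> cl (a *m b).
Proof.
move=> ha [ub hb]; split; first by rewrite unitmx_mul ub (G0u ha).
move=> Z hZ hG.
have gmM : gm (fun B => a *m B) by apply: gm_mul; [exact: gm_const|exact: gm_id].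
have [Z' [hZ' e]] := gm_preim gmM hZ.
rewrite e //; apply: hb => // B hB; rewrite -e ?G0u //.
by apply: hG; apply: G0_mul.
Qed.

Lemma cl_mul a b : cl a -> cl b -> cl (a *m b).
Proof.
move=> [ua ha] hb; split; first by rewrite unitmx_mul ua hb.1.
move=> Z hZ hG.
have gmM : gm (fun B => B *m b) by apply: gm_mul; [exact: gm_id|exact: gm_const].
have [Z' [hZ' e]] := gm_preim gmM hZ.
rewrite e //; apply: ha => // B hB; rewrite -e ?G0u //.
by have [_ h] := cl_mulG hB hb; apply: h.
Qed.

Lemma cl_inv a : cl a -> cl (invmx a).
Proof.
move=> [ua ha]; split; first by rewrite unitmx_inv.
move=> Z hZ hG.
have [Z' [hZ' e]] := gm_preim gm_inv hZ.
rewrite e //; apply: ha => // B hB; rewrite -e ?G0u //.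
by apply: hG; apply: G0_inv.
Qed.

Lemma cl_group : closed_mxgroup cl.
Proof.
split; last by have [Z [hZ e]] := cl_zclosed; exists Z.
split; [exact: cl_G0 G0_1|by move=> A [uA _]|exact: cl_mul|exact: cl_inv].
Qed.

Lemma X_cl A : X A -> cl A.
Proof. by move=> /X_G0 /cl_G0. Qed.

Lemma cl_min (K : M -> Prop) : closed_mxgroup K -> (forall A, X A -> K A) ->
  forall A, cl A -> K A.
Proof.
move=> [[K1 Ku KM KV] [Z [hZ e]]] hXK.
have hY : forall y, Yg y -> K y.
  by move=> y [/hXK//|[B [/hXK hB ->]]]; apply: KV.
have hW : forall k w, Wg k w -> K w.
  elim=> [w ->//|k IH w [y [w' [hy hw ->]]]].
  by apply: KM; [exact: hY|exact: IH hw].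
move=> A [uA hA]; apply/e; split => //; apply: hA => // B [k hB].
by have /e[] := hW _ _ hB.
Qed.

Lemma Y_G0 A : Yg A -> G0 A.
Proof. by move=> hA; exists 1%N, A, 1%:M; split => //; rewrite mulmx1. Qed.

Lemma cl_conn_aux (Z1 Z2 : M -> Prop) :
  zclosed (@mx_coord F n) Z1 -> zclosed (@mx_coord F n) Z2 ->
  (forall A, cl A -> Z1 A \/ Z2 A) -> (forall A, cl A -> Z1 A -> Z2 A -> False) ->
  Z1 1%:M -> forall A, cl A -> Z1 A.
Proof.
move=> c1 c2 cov dis Z11.
have hW : forall k w, Wg k w -> Z1 w.
  elim=> [w ->//|k IH w [y [w' [hy hw ->]]]].
  have hc : zconnected (fun B => exists A, Yg A /\ B = A *m w').
    apply: zconn_image; [exact: Yu|apply: gm_mul; [exact: gm_id|exact: gm_const]|exact: Y_conn].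
  have inc : forall B, (exists A, Yg A /\ B = A *m w') -> cl B.
    by move=> B [A [hA ->]]; apply: cl_G0; apply: G0_mul; [apply: Y_G0|exists k].
  apply: (zconn_in hc c1 c2 _ _ (p := w')).
  - by move=> B /inc; apply: cov.
  - by move=> B /inc; apply: dis.
  - by exists 1%:M; split; [left|rewrite mul1mx].
  - exact: IH.
  - by exists y.
move=> A hA; apply: hA.2 => // B [k hB]; exact: hW hB.
Qed.

Lemma cl_conn : zconnected cl.
Proof.
move=> Z1 Z2 c1 c2 cov dis.
have [h|h] := cov _ (cl_G0 G0_1).
  by left; exact: (cl_conn_aux c1 c2 cov dis h).
right; apply: (cl_conn_aux c2 c1) => //.
  by move=> A hA; rewrite or_comm; apply: cov.
by move=> A hA h1 h2; exact: (dis A hA h2 h1).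
Qed.

Lemma cl_conj h : h \in unitmx ->
  (forall A, X A -> X (h *m A *m invmx h)) ->
  forall A, cl A -> cl (h *m A *m invmx h).
Proof.
move=> uh hXh.
have hY : forall y, Yg y -> Yg (h *m y *m invmx h).
  move=> y [hy|[B [hB ->]]]; first by left; apply: hXh.
  right; exists (h *m B *m invmx h); split; first exact: hXh.
  have uB := hXu hB.
  by rewrite !invmxM ?unitmx_mul ?unitmx_inv ?uh ?uB // invmxK mulmxA.
have hW : forall k w, Wg k w -> Wg k (h *m w *m invmx h).
  elim=> [w ->|k IH w [y [w' [hy hw ->]]]]; first by rewrite mulmx1 mulmxV.
  exists (h *m y *m invmx h), (h *m w' *m invmx h); split.
  - exact: hY.
  - exact: IH.
  by rewrite !mulmxA mulmxKV.
have hG : forall w, G0 w -> G0 (h *m w *m invmx h).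
  by move=> w [k hw]; exists k; apply: hW.
move=> A [uA hA]; split; first by rewrite !unitmx_mul uA uh unitmx_inv uh.
move=> Z hZ hGZ.
have gmM : gm (fun B => h *m B *m invmx h).
  by apply: gm_mul; [apply: gm_mul; [exact: gm_const|exact: gm_id]|exact: gm_const].
have [Z' [hZ' e]] := gm_preim gmM hZ.
rewrite e //; apply: hA => // B hB; rewrite -e ?G0u //.
by apply: hGZ; apply: hG.
Qed.



Lemma gen_pack : [/\ closed_mxgroup cl, zconnected cl, (forall A, X A -> cl A),
  (forall K, closed_mxgroup K -> (forall A, X A -> K A) -> forall A, cl A -> K A) &
  (forall h, h \in unitmx -> (forall A, X A -> X (h *m A *m invmx h)) ->
     forall A, cl A -> cl (h *m A *m invmx h))].
Proof.
split; [exact: cl_group|exact: cl_conn|exact: X_cl|exact: cl_min|exact: cl_conj].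
Qed.

End Gen.

Definition cj (h A : M) := h *m A *m invmx h.

Lemma cj_mul h A B : h \in unitmx -> cj h (A *m B) = cj h A *m cj h B.
Proof. by move=> uh; rewrite /cj !mulmxA mulmxKV. Qed.

Lemma cj_unit h A : h \in unitmx -> (cj h A \in unitmx) = (A \in unitmx).
Proof. by move=> uh; rewrite /cj !unitmx_mul unitmx_inv uh andbT. Qed.

Lemma cj_inv h A : h \in unitmx -> A \in unitmx -> cj h (invmx A) = invmx (cj h A).
Proof.
move=> uh uA; rewrite /cj !invmxM ?unitmx_mul ?unitmx_inv ?uh ?uA //.
by rewrite invmxK mulmxA.
Qed.

Lemma cj_comp h k A : h \in unitmx -> k \in unitmx -> cj h (cj k A) = cj (h *m k) A.
Proof. by move=> uh uk; rewrite /cj invmxM // !mulmxA. Qed.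

Lemma cj1 A : cj 1%:M A = A.
Proof. by rewrite /cj invmx1 mul1mx mulmx1. Qed.

Lemma cj_1 h : h \in unitmx -> cj h 1%:M = 1%:M.
Proof. by move=> uh; rewrite /cj mulmx1 mulmxV. Qed.

Lemma cj_comm h z : h \in unitmx -> z *m h = h *m z -> cj h z = z.
Proof. by move=> uh e; rewrite /cj -e mulmxK. Qed.

Lemma cjK h A : h \in unitmx -> cj (invmx h) (cj h A) = A.
Proof. by move=> uh; rewrite cj_comp ?unitmx_inv // mulVmx // cj1. Qed.

Definition cm (a b : M) := a *m b *m invmx a *m invmx b.

Lemma cj_cm h a b : h \in unitmx -> a \in unitmx -> b \in unitmx ->
  cj h (cm a b) = cm (cj h a) (cj h b).
Proof. by move=> uh ua ub; rewrite /cm !cj_mul ?cj_inv. Qed.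

Lemma cm_unit a b : a \in unitmx -> b \in unitmx -> cm a b \in unitmx.
Proof. by move=> ua ub; rewrite /cm !unitmx_mul !unitmx_inv ua ub. Qed.

Lemma cm_eq1 a b : a \in unitmx -> b \in unitmx -> cm a b = 1%:M -> a *m b = b *m a.
Proof.
move=> ua ub e.
have : cm a b *m b *m a = b *m a by rewrite e mul1mx.
by rewrite /cm mulmxKV // mulmxKV.
Qed.

Lemma cm_1 a b : a \in unitmx -> b \in unitmx -> a *m b = b *m a -> cm a b = 1%:M.
Proof. by move=> ua ub e; rewrite /cm e mulmxK // mulmxV. Qed.

Lemma cm_mulE (a b Y : M) : a \in unitmx -> b \in unitmx -> Y \in unitmx ->
  cm (a *m b) Y = cj a (cm b Y) *m cm a Y.
Proof.
move=> ua ub uY; rewrite /cm /cj invmxM // !mulmxA.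
by rewrite (mulmxKV ua) (mulmxKV uY).
Qed.

Lemma cm_invE (a Y : M) : a \in unitmx -> Y \in unitmx ->
  cm (invmx a) Y = cj (invmx a) (invmx (cm a Y)).
Proof.
move=> ua uY; rewrite /cm /cj !invmxM ?unitmx_mul ?unitmx_inv ?ua ?uY // !invmxK !mulmxA.
by rewrite (mulmxKV ua).
Qed.

Definition rclosed (S : M -> Prop) := exists Z, zclosed (@mx_coord F n) Z /\
  forall A, A \in unitmx -> (S A <-> Z A).

Lemma rclosed_all (T : Type) (Ss : T -> M -> Prop) :
  (forall t, rclosed (Ss t)) -> rclosed (fun A => forall t, Ss t A).
Proof.
move=> h.
pose Idx := {p : T * (M -> Prop) | zclosed (@mx_coord F n) p.2 /\
  forall A, A \in unitmx -> (Ss p.1 A <-> p.2 A)}.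
exists (fun A => forall s : Idx, (sval s).2 A); split.
  apply: (zclosed_all (Zs := fun (s : Idx) => (sval s).2)).
  by move=> s; exact: (proj1 (proj2_sig s)).
move=> A uA; split.
  by move=> hA [[t Z] [hZ e]] /=; apply/e => //; apply: hA.
move=> hA t; have [Z [hZ e]] := h t; rewrite e //.
exact: (hA (exist _ (t, Z) (conj hZ e))).
Qed.

Lemma rclosed_and S1 S2 : rclosed S1 -> rclosed S2 -> rclosed (fun A => S1 A /\ S2 A).
Proof.
move=> [Z1 [h1 e1]] [Z2 [h2 e2]]; exists (fun A => Z1 A /\ Z2 A); split.
  exact: zclosed_and.
by move=> A uA; rewrite e1 // e2.
Qed.

Lemma rclosed_preim (Mf : M -> M) S : gm Mf -> (forall A, A \in unitmx -> Mf A \in unitmx) ->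
  rclosed S -> rclosed (fun A => S (Mf A)).
Proof.
move=> hM hu [Z [hZ e]]; have [Z' [hZ' e']] := gm_preim hM hZ.
by exists Z'; split => // A uA; rewrite e ?hu // e'.
Qed.

Lemma rclosed_eq (Mf : M -> M) : gm Mf -> rclosed (fun A => Mf A = 0).
Proof.
move=> hM.
have hZ : zclosed (@mx_coord F n) (fun A => forall ij, (fun v => v ij) (mx_coord A) = 0).
  exact: (@zclosed_eqs _ _ (@mx_coord F n) _ (fun ij v => v ij) (fun ij => pf_var _ ij)).
have [Z' [hZ' e']] := gm_preim hM hZ.
exists Z'; split => // A uA; rewrite -e' //; split.
  by move=> -> [i j]; rewrite /mx_coord mxE.
by move=> h; apply/matrixP => i j; rewrite mxE; exact: (h (i, j)).
Qed.

Lemma closed_group_r G : is_mxgroup G -> rclosed G -> closed_mxgroup G.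
Proof.
move=> hG [Z [hZ e]]; split => //; exists Z; split => // A.
case: hG => _ hu _ _; split; first by move=> hA; rewrite -e ?hu.
by move=> [hA uA]; rewrite e.
Qed.

Lemma closed_group_rc G : closed_mxgroup G -> rclosed G.
Proof.
move=> [_ [Z [hZ e]]]; exists Z; split => // A uA; rewrite e; tauto.
Qed.


Lemma rclosed_ext S S' : (forall A, A \in unitmx -> (S A <-> S' A)) -> rclosed S -> rclosed S'.
Proof. by move=> e [Z [hZ e']]; exists Z; split => // A uA; rewrite -e // e'. Qed.

End Mx.

Ltac gmt := repeat first [apply: gm_id | apply: gm_inv | apply: gm_const | apply: gm_mul].

Section Simple.
Variable n : nat.
Local Notation M := ('M[F]_n).
Variable H : M -> Prop.
Hypothesis hH : simple_alg_group H.

Lemma H_group : closed_mxgroup H. Proof. by case: hH. Qed.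
Lemma H1 : H 1%:M. Proof. by case: H_group => -[h1 hu hm hv] _. Qed.
Lemma Hu A : H A -> A \in unitmx. Proof. by case: H_group => -[h1 hu hm hv] _; apply: hu. Qed.
Lemma HM A B : H A -> H B -> H (A *m B). Proof. by case: H_group => -[h1 hu hm hv] _; apply: hm. Qed.
Lemma HV A : H A -> H (invmx A). Proof. by case: H_group => -[h1 hu hm hv] _; apply: hv. Qed.
Lemma H_conn : zconnected H. Proof. by case: hH. Qed.
Lemma H_nc : exists A B, [/\ H A, H B & A *m B <> B *m A]. Proof. by case: hH. Qed.
Lemma H_simple N : closed_mxgroup N -> zconnected N -> normal_in N H ->
  (forall A, N A <-> A = 1%:M) \/ (forall A, N A <-> H A).
Proof. by case: hH => _ _ _; apply. Qed.

Lemma Hcj h A : H h -> H A -> H (cj h A).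
Proof. by move=> hh hA; rewrite /cj; apply: HM; [apply: HM|apply: HV]. Qed.

Lemma Hcm a b : H a -> H b -> H (cm a b).
Proof. by move=> ha hb; rewrite /cm; apply: HM; [apply: HM; [apply: HM|apply: HV]|apply: HV]. Qed.

Lemma cenH z : center H z -> H z. Proof. by case. Qed.

Lemma cen_cj h z : H h -> center H z -> cj h z = z.
Proof. by move=> hh [hz e]; apply: cj_comm; [exact: Hu|exact: e]. Qed.

Lemma cen_mul a b : center H a -> center H b -> center H (a *m b).
Proof.
move=> [ha ea] [hb eb]; split; first exact: HM.
by move=> h hh; rewrite -mulmxA eb // !mulmxA ea.
Qed.

Lemma cen_inv a : center H a -> center H (invmx a).
Proof.
move=> [ha ea]; split; first exact: HV.
move=> h hh; have ua := Hu ha.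
by rewrite -[LHS](mulmxK ua) -(mulmxA (invmx a) h a) -ea // mulKmx.
Qed.

Lemma cen1 : center H 1%:M.
Proof. by split; [exact: H1|move=> h _; rewrite mul1mx mulmx1]. Qed.

Lemma cen_cjH h z : H h -> center H z -> center H (cj h z).
Proof. by move=> hh hz; rewrite cen_cj. Qed.

Lemma cen_group : closed_mxgroup (center H).
Proof.
apply: closed_group_r.
  split; [exact: cen1|by move=> A /cenH/Hu|exact: cen_mul|exact: cen_inv].
apply: (rclosed_ext (S := fun A => H A /\ forall s : {h | H h}, A *m sval s - sval s *m A = 0)).
  move=> A _; split; move=> [hA e]; split => //.
    by move=> h hh; apply/eqP; rewrite -subr_eq0; apply/eqP; exact: (e (exist _ h hh)).
  by move=> [h hh]; apply/eqP; rewrite subr_eq0; apply/eqP; apply: e.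
apply: rclosed_and; first exact: closed_group_rc H_group.
apply: rclosed_all => -[h hh] /=; apply: rclosed_eq.
by apply: gm_add; [gmt|apply: gm_opp; gmt].
Qed.


Lemma SP n0 : H n0 -> ~ center H n0 -> forall K, closed_mxgroup K ->
  (forall h g, H h -> H g -> K (cj h (cm g n0))) -> forall A, H A -> K A.
Proof.
move=> hn0 ncn0 K hK hCK.
pose X := fun B => exists h g, [/\ H h, H g & B = cj h (cm g n0)].
have un0 := Hu hn0.
have hXu : forall A, X A -> A \in unitmx.
  by move=> A [h [g [hh hg ->]]]; rewrite cj_unit ?(Hu hh) //; apply: cm_unit; [exact: Hu|exact: un0].
have cm1 : cm 1%:M n0 = 1%:M by rewrite cm_1 ?unitmx1 // mul1mx mulmx1.
have hX1 : X 1%:M by exists 1%:M, 1%:M; split => //; [exact: H1|exact: H1|rewrite cm1 cj1].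
have hXc : zconnected X.
  pose Xs := fun s : {h | H h} => (fun B => exists A, H A /\ B = cj (sval s) (cm A n0)).
  apply: (zconn_ext (X := fun B => exists s, Xs s B)).
    move=> B; split.
      by move=> [[h hh] [g [hg ->]]]; exists h, g.
    by move=> [h [g [hh hg ->]]]; exists (exist _ h hh), g.
  apply: (@zconn_union _ _ (exist _ 1%:M H1) Xs 1%:M).
    move=> [h hh]; apply: zconn_image; [exact: Hu| |exact: H_conn].
    by rewrite /cj /cm; gmt.
  move=> [h hh]; exists 1%:M; split; first exact: H1.
  by rewrite /= cm1 cj_1 ?Hu.
have [hcl hcc hXcl hmin hconj] := gen_pack hXu hX1 hXc.
have hclH : forall A, cl X A -> H A.
  apply: hmin; first exact: H_group.
  by move=> A [h [g [hh hg ->]]]; apply: Hcj => //; apply: Hcm.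
have hnorm : normal_in (cl X) H.
  split => // h A hh; apply: hconj; first exact: Hu.
  move=> B [k [g [hk hg ->]]]; exists (h *m k), g; split => //; first exact: HM.
  by rewrite -/(cj h _) cj_comp ?Hu.
have [h|h] := H_simple hcl hcc hnorm.
  case: ncn0; split => // g hg.
  have : cl X (cm g n0) by apply: hXcl; exists 1%:M, g; split => //; [exact: H1|rewrite cj1].
  by move/h/cm_eq1 => e; symmetry; apply: e; apply: Hu.
move=> A /h; apply: hmin => //.
by move=> B [k [g [hk hg ->]]]; apply: hCK.
Qed.

Lemma Zc (X : M -> Prop) : (forall A, X A -> center H A) -> X 1%:M -> zconnected X ->
  forall A, X A -> A = 1%:M.
Proof.
move=> hXZ hX1 hXc.
have hXu : forall A, X A -> A \in unitmx by move=> A /hXZ/cenH/Hu.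
have [hcl hcc hXcl hmin hconj] := gen_pack hXu hX1 hXc.
have hclZ : forall A, cl X A -> center H A by apply: hmin => //; exact: cen_group.
have hnorm : normal_in (cl X) H.
  split; first by move=> A /hclZ/cenH.
  by move=> h A hh hA; rewrite -/(cj h A) cen_cj //; apply: hclZ.
have [h|h] := H_simple hcl hcc hnorm.
  by move=> A /hXcl/h.
have [a [b [ha hb nab]]] := H_nc.
by case: nab; have [_ e] := hclZ _ ((h a).2 ha); apply: e.
Qed.

Lemma LemC y c : H y -> ~ center H y -> H c ->
  (forall d, H d -> center H (cm c (cj d y))) -> center H c.
Proof.
move=> hy ncy hc hcy.
have uy := Hu hy.
apply: NNPP => ncc.
pose D := fun c => H c /\ forall d, H d -> center H (cm c (cj d y)).
have hDg : is_mxgroup D.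
  split.
  - split; first exact: H1.
    move=> d hd; rewrite cm_1 ?unitmx1 ?cj_unit ?Hu //; first exact: cen1.
    by rewrite mul1mx mulmx1.
  - by move=> A [/Hu].
  - move=> a b [ha ea] [hb eb]; split; first exact: HM.
    move=> d hd; have ua := Hu ha; have ub := Hu hb.
    have uyd : cj d y \in unitmx by rewrite cj_unit ?Hu.
    rewrite cm_mulE //.
    apply: cen_mul; last exact: ea.
    by apply: cen_cjH => //; apply: eb.
  - move=> a [ha ea]; split; first exact: HV.
    move=> d hd; have ua := Hu ha.
    have uyd : cj d y \in unitmx by rewrite cj_unit ?Hu.
    rewrite cm_invE //.
    by apply: cen_cjH; [exact: HV|apply: cen_inv; apply: ea].
have hDc : closed_mxgroup D.
  apply: closed_group_r => //; apply: rclosed_and; first exact: closed_group_rc H_group.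
  apply: (rclosed_ext (S := fun A => forall s : {d | H d}, center H (cm A (cj (sval s) y)))).
    by move=> A _; split => h; [move=> d hd; exact: (h (exist _ d hd))|move=> [d hd]; apply: h].
  apply: rclosed_all => -[d hd] /=.
  apply: (rclosed_preim (S := center H)).
  - by rewrite /cm /cj; gmt.
  - by move=> A uA; rewrite cm_unit // cj_unit ?Hu.
  exact: closed_group_rc cen_group.
have hDn : forall h a, H h -> D a -> D (cj h a).
  move=> h a hh [ha ea]; split; first exact: Hcj.
  move=> d hd; have uh := Hu hh.
  have -> : cm (cj h a) (cj d y) = cj h (cm a (cj (invmx h *m d) y)).
    have ud := Hu hd; have ua := Hu ha.
    rewrite cj_cm //; last by rewrite cj_unit ?unitmx_mul ?unitmx_inv ?uh ?ud.
    by rewrite cj_comp ?unitmx_mul ?unitmx_inv ?uh ?ud // mulmxA mulmxV // mul1mx.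
  by apply: cen_cjH => //; apply: ea; apply: HM => //; apply: HV.
have hDH := SP hc ncc hDc.
have yD : D y.
  apply: hDH => // h g hh hg; apply: (hDn h) => //.
  have [_ _ hm hv] := hDg; apply: hm; first exact: (hDn g c hg (conj hc hcy)).
  by apply: hv; split.
have ycomm : forall d, H d -> cm y (cj d y) = 1%:M.
  pose X := fun B => exists d, H d /\ B = cm y (cj d y).
  have hXZ : forall A, X A -> center H A by move=> A [d' [hd' ->]]; apply: yD.2.
  have hX1 : X 1%:M.
    exists 1%:M; split; first exact: H1.
    by rewrite cj1 cm_1.
  have hXc : zconnected X.
    apply: zconn_image; [exact: Hu| |exact: H_conn].
    apply: (gm_ext (M1 := fun A => y *m (A *m y *m invmx A) *m invmx y *m (A *m invmx y *m invmx A))).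
      by move=> A uA; rewrite /cm -/(cj A y) -cj_inv.
    gmt.
  by move=> d hd; apply: (Zc hXZ hX1 hXc); exists d.
pose K2 := fun A => A \in unitmx /\ forall d, H d -> A *m cj d y = cj d y *m A.
have hK2g : is_mxgroup K2.
    split.
    - by split; [exact: unitmx1|move=> d _; rewrite mul1mx mulmx1].
    - by move=> A [].
    - move=> A B [uA eA] [uB eB]; split; first by rewrite unitmx_mul uA.
      by move=> d hd; rewrite -mulmxA eB // (mulmxA A) eA // -mulmxA.
    - move=> A [uA eA]; split; first by rewrite unitmx_inv.
      by move=> d hd; rewrite -[LHS](mulmxK uA) -(mulmxA (invmx A)) -eA // mulKmx.
have hK2 : closed_mxgroup K2.
  apply: closed_group_r => //.
  apply: (rclosed_ext (S := fun A => forall s : {d | H d}, A *m cj (sval s) y - cj (sval s) y *m A = 0)).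
    move=> A uA; split.
    + move=> h; split => // d hd; apply/eqP; rewrite -subr_eq0; apply/eqP; exact: (h (exist _ d hd)).
    + move=> [_ h] [d hd] /=; apply/eqP; rewrite subr_eq0; apply/eqP; exact: h.
  apply: rclosed_all => -[d hd] /=; apply: rclosed_eq.
  by apply: gm_add; [rewrite /cj; gmt|apply: gm_opp; rewrite /cj; gmt].
have conjK2 : forall e, H e -> K2 (cj e y).
  move=> e he; have ue := Hu he; split; first by rewrite cj_unit.
  move=> d hd; have ud := Hu hd.
  have := cm_eq1 uy _ (ycomm _ (HM (HV he) hd)).
  rewrite cj_unit ?unitmx_mul ?unitmx_inv ?ue ?ud // => /(_ uy) /(congr1 (cj e)).
  rewrite (cj_mul y (cj (invmx e *m d) y) ue) (cj_mul (cj (invmx e *m d) y) y ue) cj_comp ?unitmx_mul ?unitmx_inv ?ue ?ud //.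
  by rewrite (mulmxA e) mulmxV // mul1mx.
have hK2H := SP hy ncy hK2.
apply: ncy; split => // h hh.
have [_ e] : K2 h.
  apply: hK2H => // k g hk hg.
  have uk := Hu hk; have ug := Hu hg.
  have -> : cj k (cm g y) = cj (k *m g) y *m invmx (cj k y).
    rewrite /cm -/(cj g y) cj_mul ?cj_comp ?cj_inv //.
  have [_ _ hm hv] := hK2g.
  apply: hm; first by apply: conjK2; apply: HM.
  by apply: hv; apply: conjK2.
by have := e 1%:M H1; rewrite cj1.
Qed.
End Simple.

Lemma cm_goursat n (aj ai Mx : 'M[F]_n) : aj \in unitmx -> ai \in unitmx -> Mx \in unitmx ->
  cm (invmx aj *m ai) Mx = cj (invmx aj) (cj ai Mx *m invmx (cj aj Mx)).
Proof.
move=> uj ui uM.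
rewrite /cm /cj !invmxM ?unitmx_mul ?unitmx_inv ?uj ?ui ?uM // !invmxK !mulmxA.
by rewrite (mulmxKV uj).
Qed.

Lemma zpreim_poly T I T' J (c : T -> I -> F) (c' : T' -> J -> F) (phi : T -> T')
  (hphi : forall j, exists g, pf g /\ forall t, c' (phi t) j = g (c t)) Z :
  zclosed c' Z -> exists Z', zclosed c Z' /\ forall t, Z (phi t) <-> Z' t.
Proof.
move=> hZ.
have hnz : forall t : T, True -> (1 : F) != 0 by move=> t _; exact: oner_neq0.
have hph : forall j, exists g k, pf g /\ forall t, True -> 1 ^+ k * c' (phi t) j = g (c t).
  move=> j; have [g [hg e]] := hphi j; exists g, 0%N; split => // t _.
  by rewrite expr0 mul1r e.
have [Z' [hZ' e]] := @zpreim T I T' J c c' (fun _ => True) (fun _ => 1) (fun _ => 1)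
  (pf_const _ 1) (fun _ => erefl) hnz phi hph Z hZ.
by exists Z'; split => // t; apply: e.
Qed.

Section Main.
Variables (n r : nat) (H : 'M[F]_n -> Prop).
Hypothesis hH : simple_alg_group H.
Variable x : 'I_r -> 'M[F]_n.
Hypothesis hx : prodH H x.
Hypothesis hxZ : forall i, ~ center H (x i).
Hypothesis hxx : forall i j, i <> j -> ~ center H (x i *m invmx (x j)).

Local Notation L := (Lr H x).
Local Notation tup := ('I_r -> 'M[F]_n).

Lemma L_ext (f g : tup) : (forall k, f k = g k) -> L g -> L f.
Proof. by move=> e; have -> : f = g by apply: functional_extensionality. Qed.

Lemma prodH_csp : closed_subgroup_prod H (@prodH _ _ r H).
Proof.
split.
- by move=> k; exact: (H1 hH).
- by move=> a b ha hb k; apply: (HM hH).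
- by move=> a ha k; apply: (HV hH).
exists (fun _ => True); split; first exact: zclosed_True.
by move=> z; split => // -[].
Qed.

Lemma L_prodH z : L z -> prodH H z.
Proof. by move=> hz; apply: hz; [exact: prodH_csp|move=> w [d [hd e]] k; rewrite e; apply: (Hcj hH)]. Qed.

Lemma L_Gamma z : Gamma H x z -> L z.
Proof. by move=> hz K _ hK; apply: hK. Qed.

Lemma L_x : L x.
Proof. by apply: L_Gamma; exists 1%:M; split; [exact: (H1 hH)|move=> k; rewrite -/(cj _ _) cj1]. Qed.

Lemma L_1 : L (fun _ => 1%:M).
Proof. by move=> K [h1 _ _ _] _. Qed.

Lemma L_mul a b : L a -> L b -> L (fun k => a k *m b k).
Proof. by move=> ha hb K hK hG; case: (hK) => _ hm _ _; apply: hm; [apply: ha|apply: hb]. Qed.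

Lemma L_inv a : L a -> L (fun k => invmx (a k)).
Proof. by move=> ha K hK hG; case: (hK) => _ _ hv _; apply: hv; apply: ha. Qed.

Lemma csp_prodH (K : tup -> Prop) : closed_subgroup_prod H K -> forall z : tup, K z -> prodH H z.
Proof. by move=> [_ _ _ [Z [_ e]]] z /e[]. Qed.

Lemma tup_conj_poly (d : 'M[F]_n) :
  forall j, exists g, pf g /\ forall w : tup,
    tup_coord (fun k => cj d (w k)) j = g (tup_coord w).
Proof.
move=> [k [a b]].
exists (fun v => \sum_l (\sum_m d a m * v (k, (m, l))) * invmx d l b); split.
  apply: pf_sum => l; apply: pf_mul; last exact: pf_const.
  by apply: pf_sum => m; apply: pf_mul; [exact: pf_const|exact: pf_var].
move=> w; rewrite /tup_coord /cj /= mxE; apply: eq_bigr => l _.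
by rewrite mxE.
Qed.

Lemma L_conj d z : H d -> L z -> L (fun k => cj d (z k)).
Proof.
move=> hd hz K hK hG; have ud : d \in unitmx by apply: (Hu hH).
pose K' := fun w : tup => K (fun k => cj d (w k)).
apply: (hz K'); last first.
  move=> w [e [he ew]]; apply: hG; exists (d *m e); split; first exact: (HM hH).
  move=> k; rewrite ew -[RHS]/(cj (d *m e) (x k)) -[e *m _ *m _]/(cj e (x k)) cj_comp //.
  by apply: (Hu hH).
have hKp := csp_prodH hK.
case: hK => k1 km kv [Zk [hZk ek]].
split.
- rewrite /K' (_ : (fun k : 'I_r => cj d 1%:M) = fun _ => 1%:M) //.
  by apply: functional_extensionality => k; exact: cj_1.
- move=> a b ha hb; rewrite /K' (_ : (fun k => cj d (a k *m b k)) = fun k => cj d (a k) *m cj d (b k)).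
    exact: km.
  by apply: functional_extensionality => k; exact: cj_mul.
- move=> a ha; rewrite /K' (_ : (fun k => cj d (invmx (a k))) = fun k => invmx (cj d (a k))).
    exact: kv.
  apply: functional_extensionality => k; apply: cj_inv => //.
  by rewrite -(cj_unit _ ud); apply: (Hu hH); apply: (hKp _ ha).
have [Z' [hZ' e']] := zpreim_poly (tup_conj_poly d) hZk.
exists Z'; split => // w; rewrite /K' ek e'.
have -> // : prodH H (fun k => cj d (w k)) <-> prodH H w.
split => hw k.
  by rewrite -(cjK (w k) ud); apply: (Hcj hH); [apply: (HV hH)|apply: hw].
by apply: (Hcj hH).
Qed.


Lemma L_closed : exists Z, zclosed (@tup_coord F r n) Z /\
  forall z, L z <-> Z z /\ prodH H z.
Proof.
pose Idx := {p : (tup -> Prop) * (tup -> Prop) | [/\ closed_subgroup_prod H p.1,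
  (forall z, Gamma H x z -> p.1 z), zclosed (@tup_coord F r n) p.2 &
  forall z, p.1 z <-> p.2 z /\ prodH H z]}.
exists (fun z => forall s : Idx, (sval s).2 z); split.
  apply: (zclosed_all (Zs := fun s : Idx => (sval s).2)).
  by move=> s; case: (proj2_sig s).
move=> z; split.
  move=> hz; split; last exact: L_prodH.
  move=> [[K Z] [hK hG hZ e]] /=.
  by have /e[] := hz K hK hG.
move=> [hz hp] K hK hG.
have hK' := hK; case: hK' => _ _ _ [Z [hZ e]].
apply/e; split => //.
exact: (hz (exist _ (K, Z) (And4 hK hG hZ e))).
Qed.

Definition ei (i : 'I_r) (h : 'M[F]_n) : tup := fun k => if k == i then h else 1%:M.

Lemma N_group i : closed_mxgroup (fun h => L (ei i h)).
Proof.
apply: closed_group_r.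
  split.
  - by apply: (L_ext (g := fun _ => 1%:M)) => [k|]; [rewrite /ei; case: ifP|exact: L_1].
  - move=> A /L_prodH /(_ i); rewrite /ei eqxx; exact: (Hu hH).
  - move=> A B hA hB; apply: (L_ext (g := fun k => ei i A k *m ei i B k)); last exact: L_mul.
    by move=> k; rewrite /ei; case: ifP => // _; rewrite mulmx1.
  - move=> A hA; apply: (L_ext (g := fun k => invmx (ei i A k))); last exact: L_inv.
    by move=> k; rewrite /ei; case: ifP => // _; rewrite invmx1.
have [Z [hZ e]] := L_closed.
have hphi : forall j, exists g, pf g /\ forall h : 'M[F]_n,
    tup_coord (ei i h) j = g (mx_coord h).
  move=> [k [a b]]; rewrite /tup_coord /ei /=.
  case: (k == i).
    by exists (fun v => v (a, b)); split => //; exact: pf_var.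
  by exists (fun _ => (1%:M : 'M[F]_n) a b); split => //; exact: pf_const.
have [Z' [hZ' e']] := zpreim_poly hphi hZ.
apply: (rclosed_ext (S := fun h => Z' h /\ H h)).
  move=> A uA; rewrite e -e'; split; move=> [h1 h2]; split => //.
    by move=> k; rewrite /ei; case: ifP => _ //; exact: (H1 hH).
  by have := h2 i; rewrite /ei eqxx.
apply: rclosed_and; first by exists Z'; split.
exact: closed_group_rc (H_group hH).
Qed.

Definition good (i : 'I_r) (S : {set 'I_r}) := exists l, [/\ L l,
  (forall k, k \notin S -> center H (l k)) & ~ center H (l i)].

Lemma goursat (i j : 'I_r) (S : {set 'I_r}) : i != j -> j \in S -> good i S -> ~ good i (S :\ j) -> False.
Proof.
move=> nij jS [l [hl lS nli]] ngood.
have star : forall m, L m -> (forall k, k \notin S -> center H (m k)) ->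
    center H (m j) -> center H (m i).
  move=> m hm mS mj; apply: NNPP => nmi; apply: ngood; exists m; split => //.
  move=> k; rewrite in_setD1 negb_and negbK; case/orP; first by move/eqP ->.
  exact: mS.
have hxi := hx i; have hxj := hx j.
have uxi : x i \in unitmx by apply: (Hu hH).
have uxj : x j \in unitmx by apply: (Hu hH).
have hc : H (invmx (x j) *m x i) by apply: (HM hH) => //; apply: (HV hH).
have hli : H (l i) by exact: (L_prodH hl i).
have cc : center H (invmx (x j) *m x i).
  apply: (LemC hH hli nli hc) => d hd.
  pose m := fun k => cj d (l k).
  have hm : L m by apply: L_conj.
  have mS : forall k, k \notin S -> center H (m k).
    by move=> k kS; apply: (cen_cjH hH) => //; apply: lS.
  pose m1 := fun k => cj (x k) (m k).
  have hm1 : L m1.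
    by apply: L_mul; [apply: L_mul => //; exact: L_x|apply: L_inv; exact: L_x].
  pose m2 := fun k => cj (x j) (m k).
  have hm2 : L m2 by apply: L_conj.
  pose q := fun k => m1 k *m invmx (m2 k).
  have hq : L q by apply: L_mul => //; apply: L_inv.
  have qS : forall k, k \notin S -> center H (q k).
    move=> k kS; apply: (cen_mul hH).
      by apply: (cen_cjH hH) => //; apply: mS.
    by apply: (cen_inv hH); apply: (cen_cjH hH) => //; apply: mS.
  have hmi : H (m i) by exact: (L_prodH hm i).
  have umi : m i \in unitmx by apply: (Hu hH).
  have qj : center H (q j).
    have umj : m2 j \in unitmx.
      by rewrite cj_unit //; apply: (Hu hH); exact: (L_prodH hm j).
    by rewrite /q /m1 -/(m2 j) mulmxV //; exact: (cen1 hH).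
  have := star q hq qS qj.
  rewrite /q /m1 /m2 => hqi.
  rewrite /m in hqi umi *.
  rewrite cm_goursat //.
  by apply: (cen_cjH hH) => //; apply: (HV hH).
apply: (hxx (i := i) (j := j)); first by apply/eqP.
have -> : x i *m invmx (x j) = cj (x j) (invmx (x j) *m x i).
  by rewrite /cj mulmxA mulmxV // mul1mx.
exact: (cen_cjH hH).
Qed.


Lemma reduce (i : 'I_r) : forall (m : nat) (S : {set 'I_r}), (#|S| <= m)%N -> good i S -> good i [set i].
Proof.
elim=> [|m IH] S hS [l [hl lS nli]].
  have S0 : forall k, k \notin S by move=> k; apply/negP => kS; move: hS; rewrite (cardD1 k) kS.
  by exists l; split => // k _; apply: lS.
have gS : good i S by exists l.
have [[j [jS nji]]|nj] := classic (exists j, j \in S /\ j != i).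
  have [g|ng] := classic (good i (S :\ j)).
    apply: (IH (S :\ j)) => //.
    by move: hS; rewrite (cardsD1 j) jS add1n ltnS.
  by case: (goursat (i := i) (j := j) (S := S)) => //; rewrite eq_sym.
exists l; split => // k; rewrite in_set1 => nki; apply: lS.
apply/negP => kS; apply: nj; exists k; split => //.
Qed.

Lemma N_full (i : 'I_r) : forall h, H h -> L (ei i h).
Proof.
have [w [hw wS nwi]] : good i [set i].
  apply: (reduce (m := #|[set: 'I_r]|) (S := [set: 'I_r])) => //.
  by exists x; split => //; [exact: L_x|move=> k; rewrite in_setT].
have hwi : H (w i) by exact: (L_prodH hw i).
have uw : forall k, w k \in unitmx by move=> k; apply: (Hu hH); exact: (L_prodH hw k).
have hN := N_group i.
have hnorm : forall h A, H h -> L (ei i A) -> L (ei i (cj h A)).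
  move=> h A hh hA; apply: (L_ext (g := fun k => cj h (ei i A k))); last exact: L_conj.
  move=> k; rewrite /ei; case: ifP => // _; rewrite cj_1 //; exact: (Hu hH).
apply: (SP hH hwi nwi hN) => h g hh hg; apply: hnorm => //.
apply: (L_ext (g := fun k => cj g (w k) *m invmx (w k))).
  move=> k; rewrite /ei; case: ifP => [/eqP -> //|/negbT nki].
  rewrite (cen_cj hH) ?mulmxV //; apply: wS; by rewrite in_set1.
apply: L_mul; [exact: L_conj|exact: L_inv].
Qed.

Lemma main_dir (z : tup) : prodH H z -> L z.
Proof.
move=> hz.
have : forall s : seq 'I_r, L (fun k => if k \in s then z k else 1%:M).
  elim=> [|a s IH].
    by apply: (L_ext (g := fun _ => 1%:M)) => [k|]; [rewrite in_nil|exact: L_1].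
  case as_: (a \in s).
    apply: (L_ext (g := fun k => if k \in s then z k else 1%:M)) => // k.
    rewrite in_cons; case: eqP => [->|_] //=; by rewrite as_.
  apply: (L_ext (g := fun k => ei a (z a) k *m (if k \in s then z k else 1%:M))).
    move=> k; rewrite /ei in_cons; case: eqP => [->|_] /=.
      by rewrite as_ mulmx1.
    by rewrite mul1mx.
  by apply: L_mul => //; apply: N_full.
move=> /(_ (enum 'I_r)); apply: L_ext => k; by rewrite mem_enum.
Qed.

End Main.
End Poly.

End Aux.

Theorem lemma3p2 (F : closedFieldType) (hF : [pchar F] =i pred0)
  (n r : nat) (H : 'M[F]_n -> Prop) (hH : simple_alg_group H)
  (x : 'I_r -> 'M[F]_n) (hx : prodH H x)
  (hxZ : forall i, ~ center H (x i))
  (hxx : forall i j, i <> j -> ~ center H (x i *m invmx (x j))) :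
  forall z, Lr H x z <-> prodH H z.
Proof.
move=> z; split; first exact: (Aux.L_prodH hH).
exact: (Aux.main_dir hH hx hxZ hxx).
Qed.
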